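(* Up to equivalence, the first order Reed--Muller code $RM(1,5)$ is the unique binary $[32,6]$ linear code $B$ such that (i) $B$ is doubly even, (ii) $B$ contains the all-ones vector, and (iii) $B^\perp$ has minimum weight at least $4$.
   Context: A binary code is doubly even if all codeword weights are divisible by $4$. Two binary codes are equivalent if one is obtained from the other by a coordinate permutation. $RM(1,5)$ is the binary $[32,6]$ code generated by the all-ones vector and the five vectors of length $32$ given by the coordinate functions of $\mathbb{F}_2^5$; equivalently it has generator matrix with rows $1^{32}$, $1^{16}0^{16}$, $(1^80^8)^2$, $(1^40^4)^4$, $(1^20^2)^8$, $(10)^{16}$. Its weight enumerator is $1+62y^{16}+y^{32}$. *)

(* Defs.v *)
From HB Require Import structures.
From mathcomp Require Import all_boot all_order all_algebra all_fingroup.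
Set Implicit Arguments. Unset Strict Implicit. Unset Printing Implicit Defensive.
Import GRing.Theory.
Local Open Scope ring_scope.

Definition code (n : nat) := {vspace 'rV['F_2]_n}.

Definition wt n (v : 'rV['F_2]_n) : nat := #|[set i | v ord0 i != 0]|.

Definition dotv n (u v : 'rV['F_2]_n) : 'F_2 := \sum_i u ord0 i * v ord0 i.

Definition doubly_even n (B : code n) : Prop :=
  forall v, v \in B -> (4 %| wt v)%N.

Definition all_ones n : 'rV['F_2]_n := \row_(i < n) 1.

Definition in_dual n (B : code n) (u : 'rV['F_2]_n) : Prop :=
  forall c, c \in B -> dotv u c = 0.

Definition dual_min_wt_ge n (B : code n) (d : nat) : Prop :=
  forall u, in_dual B u -> u != 0 -> (d <= wt u)%N.

Definition code_equiv n (B1 B2 : code n) : Prop :=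
  exists s : 'S_n, forall v, (v \in B2) = (col_perm s v \in B1).

(* coordinate function k of F_2^5 (row with 1 at j when bit k of j is 0),
   giving rows (10)^16, (1^2 0^2)^8, ..., 1^16 0^16 for k = 0..4 *)
Definition coord_row (k : nat) : 'rV['F_2]_32 :=
  \row_(j < 32) (~~ odd (j %/ 2 ^ k))%:R.

Definition RM15 : code 32 :=
  <<[:: all_ones 32; coord_row 4; coord_row 3; coord_row 2; coord_row 1;
        coord_row 0]>>%VS.

(* Main.v *)
Require Import Defs.
From HB Require Import structures.
From mathcomp Require Import all_boot all_order all_algebra all_fingroup.
Set Implicit Arguments. Unset Strict Implicit. Unset Printing Implicit Defensive.
Import GRing.Theory.
Local Open Scope ring_scope.

Lemma card_iota n (P : pred nat) : #|[pred j : 'I_n | P j]| = count P (iota 0 n).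
Proof. by rewrite -val_enum_ord count_map -size_filter cardE enumT. Qed.

Lemma F2_cases (x : 'F_2) : x = 0 \/ x = 1.
Proof. case: x => [[|[|m]] Hm]; [left|right|]; try exact: val_inj. by []. Qed.

Lemma F2_nat (x : 'F_2) : x = (x != 0)%:R.
Proof. by case: (F2_cases x) => ->; rewrite ?eqxx ?oner_eq0. Qed.

Lemma F2_add (b1 b2 : bool) : (b1 (+) b2)%:R = b1%:R + b2%:R :> 'F_2.
Proof. case: b1; case: b2; rewrite ?addr0 ?add0r //; exact: val_inj. Qed.

Lemma F2_mul (b1 b2 : bool) : (b1 && b2)%:R = b1%:R * b2%:R :> 'F_2.
Proof. by case: b1; case: b2; rewrite ?mul1r ?mul0r. Qed.

Lemma F2_neq0 (b : bool) : (b%:R != 0 :> 'F_2) = b.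
Proof. by case: b; rewrite ?eqxx ?oner_eq0. Qed.

Definition X : seq 'rV['F_2]_32 :=
  [:: all_ones 32; coord_row 4; coord_row 3; coord_row 2; coord_row 1; coord_row 0].

Lemma RM15E : RM15 = <<X>>%VS. Proof. by []. Qed.

Definition g (i j : nat) : bool :=
  if i is _.+1 then ~~ odd (j %/ 2 ^ (5 - i)) else true.

Lemma X_entry (i : 'I_6) (j : 'I_32) : X`_i 0 j = (g i j)%:R.
Proof. by case: i => [[|[|[|[|[|[|]]]]]] ?] //; rewrite /= mxE. Qed.

Lemma comb_entry (a : 'I_6 -> 'F_2) j :
  (\sum_(i<6) a i *: X`_i) 0 j = (\big[addb/false]_(i<6) ((a i != 0) && g i j))%:R.
Proof.
rewrite summxE (big_morph (fun b : bool => b%:R : 'F_2) F2_add (erefl _)).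
by apply: eq_bigr => i _; rewrite mxE X_entry F2_mul -F2_nat.
Qed.

Lemma wt_comb (a : 'I_6 -> 'F_2) : wt (\sum_(i<6) a i *: X`_i) =
  count (fun j => \big[addb/false]_(i<6) ((a i != 0) && g i j)) (iota 0 32).
Proof.
rewrite /wt -card_iota; apply: eq_card => j.
by rewrite !inE comb_entry F2_neq0.
Qed.

Lemma fin1 (b : 'I_6 -> bool) :
  (4 %| count (fun j => \big[addb/false]_(i<6) (b i && g i j)) (iota 0 32))%N.
Proof.
under eq_count => j do rewrite !big_ord_recl big_ord0.
repeat match goal with |- context [b ?i] => let x := fresh "x" in generalize (b i) as x end.
clear b. by do 6 case.
Qed.

Lemma fin2 (b : 'I_6 -> bool) :
  count (fun j => \big[addb/false]_(i<6) (b i && g i j)) (iota 0 32) = 0%N ->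
  \big[orb/false]_(i<6) b i = false.
Proof.
under eq_count => j do rewrite !big_ord_recl big_ord0.
rewrite !big_ord_recl big_ord0.
repeat match goal with |- context [b ?i] => let x := fresh "x" in generalize (b i) as x end.
clear b. by do 6 case.
Qed.

Lemma RM_comb v : v \in RM15 -> exists a : 'I_6 -> 'F_2, v = \sum_(i<6) a i *: X`_i.
Proof. by move=> /(coord_span (X:=in_tuple X)) ->; eexists. Qed.

Lemma wt0 n : wt (0 : 'rV['F_2]_n) = 0%N.
Proof. by rewrite /wt; apply/eqP; rewrite cards_eq0; apply/eqP/setP => i; rewrite !inE mxE eqxx. Qed.

Lemma RM_de : doubly_even RM15.
Proof.
move=> v /RM_comb [a ->]; rewrite wt_comb; exact: (fin1 (fun i => a i != 0)).
Qed.

Lemma RM_dim : \dim RM15 = 6%N.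
Proof.
have: free (in_tuple X).
  apply/freeP => k Hk i.
  have := wt_comb k; rewrite Hk wt0 => H0.
  have H := fin2 (esym H0); apply/eqP; apply/negPn/negP => ki.
  by move: H; rewrite (bigD1 i) //= ki.
by rewrite /free => /eqP.
Qed.

Lemma RM_one : all_ones 32 \in RM15.
Proof. by apply: memv_span; rewrite inE eqxx. Qed.

Lemma F2_natr n : (n%:R : 'F_2) = (odd n)%:R.
Proof. elim: n => // n IH; by rewrite mulrS IH /= -[(~~ _)]/(true (+) odd n) F2_add. Qed.

Lemma F2_opp (x : 'F_2) : - x = x.
Proof. case: (F2_cases x) => ->; rewrite ?oppr0 //; exact: val_inj. Qed.

Lemma dot_supp n (u c : 'rV['F_2]_n) :
  dotv u c = \sum_(i | u 0 i != 0) c 0 i.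
Proof.
rewrite /dotv (bigID (fun i => u 0 i != 0)) /= [X in _ + X]big1 ?addr0.
  by apply: eq_bigr => i ui; rewrite (F2_nat (u 0 i)) ui mul1r.
by move=> i /negPn/eqP ->; rewrite mul0r.
Qed.

Lemma bits_inj (x y : 'I_32) :
  (forall k, (k < 5)%N -> odd (x %/ 2 ^ k) = odd (y %/ 2 ^ k)) -> x = y.
Proof.
have H : all (fun m => all (fun n => (all (fun k => odd (m %/ 2^k) == odd (n %/ 2^k)) (iota 0 5)) ==> (m == n)) (iota 0 32)) (iota 0 32).
  by vm_compute.
move=> Hk; apply: val_inj.
have /allP /(_ x) := H; rewrite mem_iota ltn_ord => /(_ isT) /allP /(_ y).
rewrite mem_iota ltn_ord => /(_ isT) /implyP H1; apply/eqP; apply: H1.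
by apply/allP => k; rewrite mem_iota => /andP [_ kl]; rewrite Hk.
Qed.

Lemma cr_entry k (j : 'I_32) : coord_row k 0 j = (~~ odd (j %/ 2 ^ k))%:R.
Proof. by rewrite mxE. Qed.

Lemma cr_in k : (k < 5)%N -> coord_row k \in X.
Proof. by rewrite /X !inE; case: k => [|[|[|[|[|]]]]] //= _; rewrite eqxx ?orbT. Qed.

Lemma RM_dual : dual_min_wt_ge RM15 4.
Proof.
move=> u Hu u0.
have wtE : wt u = #|[pred i | u 0 i != 0]|.
  by apply: eq_card => i; rewrite !inE.
have Hev : ~~ odd (wt u).
  have := Hu _ RM_one; rewrite dot_supp.
  under eq_bigr => i _ do rewrite mxE.
  rewrite sumr_const -wtE F2_natr.
  by case: (odd _) => //= /eqP; rewrite oner_eq0.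
have Hnz : wt u != 0%N.
  apply: contraNneq u0 => /eqP; rewrite cards_eq0 => /eqP S0.
  apply/eqP/matrixP => i j; rewrite !mxE [i]ord1.
  by apply/eqP/negPn/negP => uj; move: (in_set0 j); rewrite -S0 inE uj.
have H2 : wt u != 2%N.
  rewrite /wt; apply/negP => /cards2P [x [y [xy Sxy]]].
  have xy' := xy; case/negP: xy'; apply/eqP; apply: bits_inj => k kl.
  have Hd := Hu (coord_row k) (memv_span (cr_in kl)).
  have {}Hd : coord_row k 0 x + coord_row k 0 y = 0.
    rewrite -Hd dot_supp.
    rewrite (eq_bigl [pred i | i \in [set x; y]]); last first.
      by move=> i; rewrite /= -Sxy inE.
    by rewrite big_setU1 ?big_set1 //= inE.
  move: Hd; rewrite !cr_entry => /eqP; rewrite addr_eq0 F2_opp => /eqP Hd.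
  by have := congr1 (fun z => z != 0) Hd; rewrite /= !F2_neq0 => /negb_inj.
move: Hev Hnz H2; case: (wt u) => [|[|[|[|]]]] //.
Qed.

Lemma F2_11 : 1 + 1 = 0 :> 'F_2. Proof. exact: val_inj. Qed.
Lemma F2_xx (x : 'F_2) : x + x = 0.
Proof. by case: (F2_cases x) => ->; rewrite ?addr0 ?F2_11. Qed.

Lemma bits5 (b0 b1 b2 b3 b4 : bool) m : (m < 5)%N ->
  odd ((b0 + b1 * 2 + b2 * 4 + b3 * 8 + b4 * 16) %/ 2 ^ m) = nth false [:: b0; b1; b2; b3; b4] m.
Proof. by case: m => [|[|[|[|[|]]]]] //; case: b0; case: b1; case: b2; case: b3; case: b4. Qed.

Lemma bits5_lt (b0 b1 b2 b3 b4 : bool) : (b0 + b1 * 2 + b2 * 4 + b3 * 8 + b4 * 16 < 32)%N.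
Proof. by case: b0; case: b1; case: b2; case: b3; case: b4. Qed.

Definition psi (bs : seq 'rV['F_2]_32) (j : 'I_32) : 'I_32 :=
  let p k := (bs`_k 0 j != 0) in inord (p 0 + p 1 * 2 + p 2 * 4 + p 3 * 8 + p 4 * 16)%N.

Lemma psi_key bs k j : (k < 5)%N -> coord_row k 0 (psi bs j) = 1 + bs`_k 0 j.
Proof.
move=> kl; rewrite cr_entry /psi inordK ?bits5_lt // bits5 //.
have -> : nth false [:: bs`_0 0 j != 0; bs`_1 0 j != 0; bs`_2 0 j != 0;
        bs`_3 0 j != 0; bs`_4 0 j != 0] k = (bs`_k 0 j != 0).
  by case: k kl => [|[|[|[|[|]]]]].
by case: (F2_cases (bs`_k 0 j)) => ->; rewrite ?eqxx ?oner_eq0 /= ?addr0 ?F2_11.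
Qed.

Lemma agree (bs : seq 'rV['F_2]_32) (i j : 'I_32) c :
  size bs = 5%N -> (forall k, (k < 5)%N -> bs`_k 0 i = bs`_k 0 j) ->
  c \in <<all_ones 32 :: bs>>%VS -> c 0 i = c 0 j.
Proof.
move=> szbs Hk /(coord_span (X:=in_tuple (all_ones 32 :: bs))) ->.
rewrite !summxE; apply: eq_bigr => l _; rewrite !mxE; congr (_ * _).
case: l => [[|k] /= lt]; first by rewrite !mxE.
case: (ltnP k 5) => kl; first exact: Hk.
by rewrite nth_default ?szbs // !mxE.
Qed.

Lemma dot_pair n (i j : 'I_n) (c : 'rV['F_2]_n) :
  dotv (\row_l ((l == i)%:R + (l == j)%:R)) c = c 0 i + c 0 j.
Proof.
rewrite /dotv; under eq_bigr => l _ do rewrite mxE mulrDl.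
rewrite big_split /=.
by rewrite (bigD1 i isT) (bigD1 j isT) /= !eqxx !mul1r !big1 ?addr0 // => l /negbTE ->; rewrite mul0r.
Qed.

Lemma psi_inj (B : code 32) bs :
  size bs = 5%N -> B = <<all_ones 32 :: bs>>%VS -> dual_min_wt_ge B 4 ->
  injective (psi bs).
Proof.
move=> szbs BE dualB i j Hij; apply/eqP/negPn/negP => ij.
have Hk : forall k, (k < 5)%N -> bs`_k 0 i = bs`_k 0 j.
  by move=> k kl; apply: (@addrI _ 1); rewrite -!psi_key // Hij.
set u := \row_l ((l == i)%:R + (l == j)%:R) : 'rV['F_2]_32.
have ud : in_dual B u.
  move=> c; rewrite BE => Hc; rewrite dot_pair (agree szbs Hk Hc).
  exact: F2_xx.
have u0 : u != 0.
  apply/eqP => /matrixP /(_ 0 i); rewrite !mxE eqxx (negbTE ij) addr0 => /eqP.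
  by rewrite oner_eq0.
have := dualB u ud u0; apply/negP; rewrite -ltnNge /wt.
apply: (@leq_ltn_trans #|[set i; j]|); last by rewrite cards2 ij.
apply: subset_leq_card; apply/subsetP => l; rewrite !inE mxE.
by case: (l == i); case: (l == j); rewrite ?orbT ?eqxx.
Qed.

Lemma part2 (B : code 32) : \dim B = 6%N -> all_ones 32 \in B ->
  dual_min_wt_ge B 4 -> code_equiv RM15 B.
Proof.
move=> dimB oneB dualB.
set one := all_ones 32.
set C := (B :\: <[one]>)%VS.
have one0 : one != 0.
  by apply/eqP => /matrixP /(_ 0 0); rewrite !mxE => /eqP; rewrite oner_eq0.
have BC : (<[one]> + C)%VS = B.
  by rewrite addvC /C addv_diff; apply/addv_idPl; rewrite -memvE.
have dimC : \dim C = 5%N.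
  have := dimv_sum_cap C <[one]>; rewrite capv_diff dimv0 dim_vline one0 addn0 addvC BC dimB.
  by move=> /(congr1 predn); rewrite addn1.
set bs := vbasis C.
have szbs : size bs = 5%N by rewrite size_tuple dimC.
have BE : B = <<one :: bs>>%VS by rewrite span_cons (span_basis (vbasisP C)) BC.
pose s := perm (psi_inj szbs BE dualB).
pose f := linfun (col_perm (s^-1)%g : 'rV['F_2]_32 -> 'rV['F_2]_32).
have Hj : forall j, psi bs (s^-1 j)%g = j.
  by move=> j; rewrite -[RHS](permKV s j) /s permE.
have fsub : (f @: B <= RM15)%VS.
  rewrite BE limg_span; apply/span_subvP => x /mapP [y]; rewrite inE => /orP [/eqP -> -> | ybs ->].
    rewrite lfunE /=; suff -> : col_perm (s^-1)%g one = one by exact: RM_one.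
    by apply/matrixP => a j; rewrite !mxE.
  have [k kl <-] := (nthP 0 ybs); rewrite szbs in kl.
  rewrite lfunE /=; suff -> : col_perm (s^-1)%g bs`_k = one + coord_row k.
    by apply: memvD; [exact: RM_one | apply: memv_span; exact: cr_in].
  apply/matrixP => a j; rewrite [a]ord1 mxE [RHS]mxE.
  by rewrite /one mxE -[in coord_row k 0 j](Hj j) psi_key // addrA F2_11 add0r.
have finj : injective f.
  move=> x y; rewrite !lfunE /= => /(congr1 (col_perm s)).
  by rewrite -!col_permM !mulgV !col_perm1.
have fB : (f @: B)%VS = RM15.
  apply/eqP; rewrite eqEdim fsub limg_dim_eq ?dimB ?RM_dim //.
  by move/lker0P/eqP: finj => ->; rewrite capv0.
have fE : forall x, col_perm (s^-1)%g x = f x by move=> x; rewrite lfunE.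
exists (s^-1)%g => v; rewrite -fB fE; apply/idP/idP.
  by move=> vB; rewrite memv_img.
by move=> /memv_imgP [w wB] /finj ->.
Qed.

Theorem mainTheorem7 :
  (\dim RM15 = 6%N /\ doubly_even RM15 /\ all_ones 32 \in RM15
     /\ dual_min_wt_ge RM15 4) /\
  (forall B : code 32,
     \dim B = 6%N -> doubly_even B -> all_ones 32 \in B ->
     dual_min_wt_ge B 4 -> code_equiv RM15 B).
Proof.
split; first by split; [exact: RM_dim | split; [exact: RM_de | split; [exact: RM_one | exact: RM_dual]]].
by move=> B dB _ oB duB; exact: part2.
Qed.
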